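(* Let $\sigma:\mathbb{R}\to\mathbb{R}$ be either a continuous and strictly monotonic function or the ReLU function $\sigma(t)=\max\{t,0\}$. Let $F:\mathbb{R}^{d_{in}}\to\mathbb{R}^{d_{out}}$ be a neural network function with activation function $\sigma$ and width $\omega_F\le d_{in}$. Then for every $j\in\{1,\dots,d_{out}\}$, every non-empty connected component of the decision region $C_j$ of $F$ is unbounded.
   Context: A neural network function $F:\mathbb{R}^{d_{in}}\to\mathbb{R}^{d_{out}}$ with $L$ layers and activation $\sigma$ has the form $F=W_L\circ A_{L-1}\circ\dots\circ A_1$, where $A_j(x)=\sigma(W_jx+b_j)$ with $W_j\in\mathbb{R}^{d_j\times d_{j-1}}$, $b_j\in\mathbb{R}^{d_j}$, $d_0=d_{in}$, $d_L=d_{out}$, $W_L\in\mathbb{R}^{d_L\times d_{L-1}}$, and $\sigma$ is applied componentwise. The width of $F$ is $\omega_F=\max\{d_j:j=1,\dots,L\}$. Writing $F=(F_1,\dots,F_{d_{out}})$, the decision region of class $j$ is $C_j=\{x\in\mathbb{R}^{d_{in}}:F_j(x)>F_k(x)\text{ for all }k\neq j\}$. A set $C\subset\mathbb{R}^d$ is connected if there are no disjoint open sets $U,V\subset\mathbb{R}^d$ with $C\subset U\cup V$ and $C\cap U$, $C\cap V$ both non-empty; the connected components of an open set are its maximal connected subsets. *)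

(* Defs.v *)
From HB Require Import structures.
From mathcomp Require Import all_boot all_order all_algebra.
From mathcomp Require Import all_classical all_reals all_analysis.
Set Implicit Arguments. Unset Strict Implicit. Unset Printing Implicit Defensive.
Import Order.TTheory GRing.Theory Num.Theory.
Import numFieldNormedType.Exports.
Local Open Scope ring_scope.
Local Open Scope classical_set_scope.

(* Vectors of R^d are column vectors 'cV[R]_d.
   - [Out W] : the final linear layer W_L : R^(d_{L-1}) -> R^(d_L) (no bias).
   - [Hidden W b N] : a hidden layer A(x) = sigma(W x + b), with W : k x m,
     followed by the rest of the network N : R^k -> R^n. *)
Inductive net (R : Type) : nat -> nat -> Type :=
| Out : forall m n : nat, 'M[R]_(n, m) -> net R m n
| Hidden : forall m k n : nat, 'M[R]_(k, m) -> 'cV[R]_k -> net R k n -> net R m n.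

Fixpoint net_eval (R : pzRingType) (sigma : R -> R) (m n : nat) (N : net R m n)
  : 'cV[R]_m -> 'cV[R]_n :=
  match N in net _ m n return 'cV[R]_m -> 'cV[R]_n with
  | Out _ _ W => fun x => W *m x
  | Hidden _ _ _ W b N' => fun x => net_eval sigma N' (map_mx sigma (W *m x + b))
  end.

Fixpoint net_width (R : Type) (m n : nat) (N : net R m n) : nat :=
  match N with
  | Out _ n _ => n
  | Hidden _ k _ _ _ N' => maxn k (net_width N')
  end.

Definition decision_region (R : numDomainType) (din dout : nat)
  (F : 'cV[R]_din -> 'cV[R]_dout) (j : 'I_dout) : set 'cV[R]_din :=
  [set x | forall k : 'I_dout, k != j -> F x k ord0 < F x j ord0].

Definition relu (R : realDomainType) (t : R) : R := Num.max t 0.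

(* Main.v *)
Require Import Defs.
From HB Require Import structures.
From mathcomp Require Import all_boot all_order all_algebra.
From mathcomp Require Import all_classical all_reals all_analysis.
From mathcomp Require Import lra.
Import Order.TTheory GRing.Theory Num.Theory.
Import numFieldNormedType.Exports.
Local Open Scope ring_scope.
Local Open Scope classical_set_scope.


Lemma coord_le_norm (R : realType) a b (x : 'M[R]_(a,b)) (i : 'I_a) (j : 'I_b) : `|x i j| <= `|x|.
Proof.
have -> : `|x| = mx_norm x by []. rewrite mx_normrE.
by apply/bigmax_geP; right; exists (i, j).
Qed.

Lemma norm_le_coord (R : realType) a b (x : 'M[R]_(a,b)) (M : R) :
  0 <= M -> (forall i j, `|x i j| <= M) -> `|x| <= M.
Proof.
move=> M0 H; have -> : `|x| = mx_norm x by []. rewrite mx_normrE.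
by apply/bigmax_leP; split => // -[i j] _; exact: H.
Qed.

Lemma mx_ballE (R : realType) a b (x y : 'M[R]_(a,b)) e :
  ball x e y <-> `|x - y| < e.
Proof. by rewrite -ball_normE. Qed.
Lemma mx_cont (R : realType) (T : topologicalType) a b (f : T -> 'M[R]_(a,b)) :
  (forall i j, continuous (fun t => f t i j)) -> continuous f.
Proof.
move=> H t; apply/cvg_ballP => e e0.
have e20 : 0 < e / 2 by rewrite divr_gt0.
have : \forall s \near t, forall ij : 'I_a * 'I_b,
    ball (f t ij.1 ij.2) (e / 2) (f s ij.1 ij.2).
  apply: filter_forall => -[i j]; exact: (cvg_ball (H i j t)).
apply: filterS => s Hs; apply/mx_ballE.
apply: (le_lt_trans (y := e / 2)); last by rewrite ltr_pdivrMr // ltr_pMr // ltr1n.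
apply: norm_le_coord; first exact: ltW.
move=> i j; rewrite !mxE; have := Hs (i, j); rewrite -ball_normE /= => /ltW //.
Qed.

Lemma sum_cont (R : realType) (T : topologicalType) (I : eqType) (r : seq I)
  (g : I -> T -> R) :
  (forall j, continuous (g j)) -> continuous (fun x => \sum_(j <- r) g j x).
Proof.
move=> H; elim: r => [|j r IH].
  under eq_fun do rewrite big_nil; exact: cst_continuous.
under eq_fun do rewrite big_cons.
by move=> x; apply: continuousD; [exact: H|exact: IH].
Qed.

Lemma aff_cont (R : realType) a b (W : 'M[R]_(b,a)) (c : 'cV[R]_b) :
  continuous (fun x : 'cV[R]_a => W *m x + c).
Proof.
apply: mx_cont => i j.
under eq_fun do rewrite !mxE.
move=> x; apply: continuousD; last exact: cst_continuous.
apply: sum_cont => k y; apply: continuousM; first exact: cst_continuous.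
exact: coord_continuous.
Qed.

Lemma map_cont (R : realType) a (s : R -> R) : continuous s ->
  continuous (fun x : 'cV[R]_a => map_mx s x).
Proof.
move=> hs; apply: mx_cont => i j.
under eq_fun do rewrite !mxE.
move=> x; apply: continuous_comp; [exact: coord_continuous | exact: hs].
Qed.

Lemma line_cont (R : realType) a (x v : 'cV[R]_a) (phi : R -> R) :
  continuous phi -> continuous (fun t : R => x + phi t *: v).
Proof.
move=> hp t; apply: (@continuousD _ _ _ (fun=> x) (fun t => phi t *: v)).
  exact: cst_continuous.
exact: (@continuousZr_tmp _ _ _ phi v t (hp t)).
Qed.

Lemma bnd_ex (R : realType) (V : normedModType R) (A : set V) :
  bounded_set A -> exists M : R, forall y, A y -> `|y| <= M.
Proof.
move=> [M [Mreal HM]]; exists (M + 1) => y Ay.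
by apply: (HM (M + 1)) => //; rewrite ltrDl.
Qed.

Lemma ex_bnd (R : realType) (V : normedModType R) (A : set V) (M : R) :
  (forall y, A y -> `|y| <= M) -> bounded_set A.
Proof.
move=> H; exists M; split; first exact: num_real.
by move=> N MN y Ay; apply: le_trans (H y Ay) (ltW MN).
Qed.

Lemma bnd_sub (R : realType) (V : normedModType R) (A B : set V) :
  A `<=` B -> bounded_set B -> bounded_set A.
Proof.
by move=> AB /bnd_ex [M HM]; apply: (@ex_bnd _ _ _ M) => y /AB /HM.
Qed.

Lemma range_connected (R : realType) (T : topologicalType) (c : R -> T) :
  continuous c -> connected (range c).
Proof.
move=> hc; apply: connected_continuous_connected.
  by apply/connected_intervalP => x y _ _ z _.
exact: continuous_subspaceT.
Qed.

Lemma line_unbounded (R : realType) a (x v : 'cV[R]_a) (phi : R -> R) :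
  v != 0 -> (forall M, exists t, M <= phi t) ->
  ~ bounded_set (range (fun t => x + phi t *: v)).
Proof.
move=> v0 hphi /bnd_ex [M HM].
have nv : 0 < `|v| by rewrite normr_gt0.
have [t ht] := hphi ((M + `|x|) / `|v| + 1).
have := HM _ (ex_intro2 _ _ t I erefl) => /=.
have : `|phi t *: v| <= `|x + phi t *: v| + `|x|.
  by rewrite -{1}(addKr x (phi t *: v)) addrC; apply: le_trans (ler_normD _ _) _; rewrite normrN addrC.
rewrite normrZ => h1 h2.
have h3 : phi t * `|v| <= M + `|x|.
  apply: le_trans (ler_norm _) _; rewrite normrM normr_id.
  by apply: le_trans h1 _; rewrite lerD2r.
have : ((M + `|x|) / `|v| + 1) * `|v| <= M + `|x|.
  by apply: le_trans h3; rewrite ler_pM2r.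
rewrite mulrDl divfK ?gt_eqF // mul1r => /le_trans/(_ (lexx _)).
by rewrite gerDl leNgt nv.
Qed.
Lemma ball_connected (R : realType) (V : normedModType R) (x : V) (e : R) :
  connected (ball x e).
Proof.
have -> : ball x e = \bigcup_(y in ball x e)
    ((fun t : R => x + t *: (y - x)) @` `[0, 1]).
  apply/seteqP; split => [y Hy|z [y Hy [t Ht <-]]].
    exists y => //; exists 1; first by rewrite /= in_itv /= lexx ler01.
    by rewrite scale1r addrC subrK.
  move: Hy; rewrite -!ball_normE /= => Hy.
  rewrite opprD addrA subrr sub0r normrN normrZ.
  move: Ht; rewrite /= in_itv /= => /andP [t0 t1].
  rewrite ger0_norm //; apply: le_lt_trans Hy.
  rewrite -normrN opprB -[leRHS]mul1r; exact: ler_wpM2r.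
apply: bigcup_connected.
  exists x => y _; exists 0; first by rewrite /= in_itv /= lexx ler01.
  by rewrite scale0r addr0.
move=> y _; apply: connected_continuous_connected; first exact: segment_connected.
apply: continuous_subspaceT => t.
apply: cvgD; first exact: cvg_cst.
exact: (@continuousZr_tmp _ _ _ id (y - x) t).
Qed.

Lemma cc_open (R : realType) (V : normedModType R) (A : set V) (x : V) :
  open A -> open (connected_component A x).
Proof.
move=> oA'; have oA := oA'; move: oA; rewrite openE => oA.
suff : connected_component A x `<=` interior (connected_component A x).
  by rewrite -[X in X -> _]/([set A | A `<=` interior A] _) -openE.
move=> y Hy.
have Ay := connected_component_sub Hy.
have := oA y Ay; rewrite /interior => /nbhs_ballP [e e0 He].
apply/nbhs_ballP; exists e => // z Hz.
rewrite (same_connected_component Hy).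
apply: (connected_component_max (B := ball y e)) => //.
  exact: ballxx.
exact: ball_connected.
Qed.

Lemma cc_closure_in (R : realType) (V : normedModType R) (A : set V) (x q : V) :
  open A -> A q -> closure (connected_component A x) q ->
  connected_component A x q.
Proof.
move=> oA Aq cq.
have := cq _ (open_nbhs_nbhs (conj (@cc_open _ _ A q oA) (connected_component_refl Aq))).
move=> [z [Hz1 Hz2]].
rewrite (same_connected_component Hz1).
by rewrite -(same_connected_component Hz2); exact: connected_component_refl.
Qed.
Lemma closed_preimage (T U : topologicalType) (f : T -> U) (B : set U) :
  continuous f -> closed B -> closed (f @^-1` B).
Proof.
move=> cf cB; rewrite -[f @^-1` B]setCK preimage_setC.
apply: open_closedC; apply: open_comp; last exact: closed_openC.
by move=> y _; exact: cf.
Qed.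

Lemma tr_norm (R : realType) a b (x : 'M[R]_(a,b)) : `|x^T| = `|x|.
Proof.
apply/le_anti/andP; split; apply: norm_le_coord => // i j.
  by rewrite mxE; exact: coord_le_norm.
by have := @coord_le_norm _ _ _ (x^T) j i; rewrite mxE.
Qed.

Lemma cV_compact (R : realType) a (A : set 'cV[R]_a) :
  bounded_set A -> closed A -> compact A.
Proof.
move=> bA cA.
have ctr : forall p q, continuous (fun v : 'M[R]_(p,q) => v^T).
  by move=> p q; apply: mx_cont => i j; under eq_fun do rewrite mxE; exact: coord_continuous.
have -> : A = (fun v : 'rV[R]_a => v^T) @` [set v | A v^T].
  apply/seteqP; split => [y Ay|_ [v Av <-] //].
  by exists y^T; rewrite /= trmxK.
apply: continuous_compact.
  by apply: continuous_subspaceT; exact: ctr.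
apply: bounded_closed_compact.
  move: bA => /bnd_ex [M HM]; apply: (@ex_bnd _ _ _ M) => v /HM.
  by rewrite tr_norm.
apply: (@closed_preimage _ _ (fun v : 'rV[R]_a => v^T) A) => //; exact: ctr.
Qed.


Lemma closure_bounded (R : realType) (V : normedModType R) (A : set V) :
  bounded_set A -> bounded_set (closure A).
Proof.
move=> /bnd_ex [M HM]; apply: (@ex_bnd _ _ _ M).
have cS : closed [set y : V | `|y| <= M].
  apply: (@closed_preimage _ _ (fun y : V => `|y|) [set r : R | r <= M]).
    exact: norm_continuous.
  exact: closed_le.
have : closure A `<=` [set y : V | `|y| <= M].
  by rewrite [X in _ `<=` X](closure_id _).1 //; exact: closureS.
by move=> H y /H.
Qed.

Lemma layer_gen (R : realType) a b (f : 'cV[R]_a -> 'cV[R]_b) (V : set 'cV[R]_b) x :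
  continuous f -> open V -> V (f x) ->
  bounded_set (connected_component (f @^-1` V) x) ->
  open (f @` connected_component (f @^-1` V) x) ->
  bounded_set (connected_component V (f x)).
Proof.
move=> cf oV Vfx bD oD.
set D := connected_component (f @^-1` V) x.
set K := closure D.
have cK : compact K by apply: cV_compact; [exact: closure_bounded|exact: closed_closure].
have cfK : compact (f @` K).
  by apply: continuous_compact => //; apply: continuous_subspaceT.
have clfK : closed (f @` K) by apply: compact_closed => //; exact: norm_hausdorff.
have ofV : open (f @^-1` V) by apply: open_comp => // y _; exact: cf.
set E := connected_component V (f x).
have EfD : E `<=` f @` D.
  have cE : connected E := @component_connected _ V (f x).
  suff HE : E `&` f @` D = E by move=> y; rewrite -HE => -[].
  apply: cE.
  - exists (f x); split; first exact: connected_component_refl.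
    by exists x => //; apply: connected_component_refl.
  - by exists (f @` D) => //.
  - exists (f @` K) => //; apply/seteqP; split.
      move=> p [Ep [q Dq fq]]; split => //; exists q => //.
      exact: subset_closure.
    move=> p [Ep [q Kq fq]]; split => //; exists q => //.
    apply: cc_closure_in => //.
    by rewrite /preimage /= fq; exact: connected_component_sub Ep.
apply: (@bnd_sub _ 'cV[R]_b E (f @` D) EfD); apply: (@bnd_sub _ 'cV[R]_b _ (f @` K)).
  by move=> _ [q Dq <-]; exists q => //; exact: subset_closure.
exact: compact_bounded.
Qed.


Definition Hp {R : realType} {a b} (f : 'cV[R]_a -> 'cV[R]_b) :=
  forall (V : set 'cV[R]_b) x, open V -> V (f x) ->
  bounded_set (connected_component (f @^-1` V) x) ->
  bounded_set (connected_component V (f x)).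

Definition Qp {R : realType} {a b} (f : 'cV[R]_a -> 'cV[R]_b) :=
  forall (V : set 'cV[R]_b) x, open V -> V (f x) ->
  ~ bounded_set (connected_component (f @^-1` V) x).

Lemma Hp_comp (R : realType) a b c (f : 'cV[R]_a -> 'cV[R]_b) (g : 'cV[R]_b -> 'cV[R]_c) :
  continuous g -> Hp f -> Hp g -> Hp (g \o f).
Proof.
move=> cg hf hg V x oV Vx bD.
have og : open (g @^-1` V) by apply: open_comp => // y _; exact: cg.
by apply: hg => //; apply: hf.
Qed.

Lemma Qp_comp (R : realType) a b c (f : 'cV[R]_a -> 'cV[R]_b) (g : 'cV[R]_b -> 'cV[R]_c) :
  continuous g -> Qp f -> Qp (g \o f).
Proof.
move=> cg hf V x oV Vx.
have og : open (g @^-1` V) by apply: open_comp => // y _; exact: cg.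
exact: (hf (g @^-1` V) x og Vx).
Qed.

Lemma HQp_comp (R : realType) a b c (f : 'cV[R]_a -> 'cV[R]_b) (g : 'cV[R]_b -> 'cV[R]_c) :
  continuous g -> Hp f -> Qp g -> Qp (g \o f).
Proof.
move=> cg hf hg V x oV Vx bD.
have og : open (g @^-1` V) by apply: open_comp => // y _; exact: cg.
by apply: (hg V (f x)) => //; apply: hf.
Qed.

Lemma Qp_kernel (R : realType) a b (f : 'cV[R]_a -> 'cV[R]_b) (v : 'cV[R]_a) :
  v != 0 -> (forall x t, f (x + t *: v) = f x) -> Qp f.
Proof.
move=> v0 hf V x oV Vx bD.
apply: (@line_unbounded R a x v (fun t => t ^+ 2) v0).
  move=> M; exists (`|M| + 1).
  have h1 := ler_norm M; have h2 := normr_ge0 M.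
  rewrite expr2; nra.
apply: bnd_sub bD.
apply: connected_component_max.
- by exists 0 => //=; rewrite expr2 mulr0 scale0r addr0.
- by move=> _ [t _ <-]; rewrite /preimage /= hf.
- apply: range_connected; apply: line_cont.
  by move=> t; apply: continuousM; exact: cvg_id.
Qed.

Lemma Hp_aff (R : realType) a (W : 'M[R]_a) (c : 'cV[R]_a) :
  W \in unitmx -> Hp (fun x => W *m x + c).
Proof.
move=> Wu.
pose f := fun x : 'cV[R]_a => W *m x + c.
have cf : continuous f := @aff_cont R a a W c.
move=> V x oV Vx bD.
pose g := fun y : 'cV[R]_a => invmx W *m y + (- (invmx W *m c)).
have gf : forall z, g (f z) = z.
  by move=> z; rewrite /g /f mulmxDr mulmxA mulVmx // mul1mx addrK.
have fg : forall y, f (g y) = y.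
  by move=> y; rewrite /g /f mulmxDr mulmxA mulmxV // mul1mx mulmxN mulmxA mulmxV // mul1mx subrK.
have oI : open (f @` connected_component (f @^-1` V) x).
  have -> : f @` connected_component (f @^-1` V) x
      = g @^-1` connected_component (f @^-1` V) x.
    apply/seteqP; split => [_ [z Dz <-]|y Dy]; first by rewrite /preimage /= gf.
    by exists (g y) => //.
  apply: open_comp; first by move=> y _; exact: (@aff_cont R a a).
  apply: cc_open; apply: open_comp => // y _; exact: cf.
exact: (@layer_gen R a a f V x cf oV Vx bD oI).
Qed.

Lemma Hp_mono (R : realType) a (s : R -> R) :
  continuous s -> (forall u t, u < t -> s u < s t) ->
  Hp (fun x : 'cV[R]_a => map_mx s x).
Proof.
move=> cs ms.
pose f := fun x : 'cV[R]_a => map_mx s x.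
have cf : continuous f := @map_cont R a s cs.
move=> V x oV Vx bD.
have ofV : open (f @^-1` V) by apply: open_comp => // y _; exact: cf.
set D := connected_component (f @^-1` V) x.
have oD : open D := @cc_open R _ _ x ofV.
have oI : open (f @` D).
  rewrite openE => _ [d Dd <-].
  have := oD; rewrite openE => /(_ d Dd) /nbhs_ballP [e e0 He].
  set h := e / 2.
  have h0 : 0 < h by rewrite divr_gt0.
  have : \forall z \near f d, forall ij : 'I_a * 'I_1,
      s (d ij.1 ij.2 - h) < (z : 'cV[R]_a) ij.1 ij.2 < s (d ij.1 ij.2 + h).
    apply: (@filter_forall _ _ _ (nbhs (f d)) _) => -[i j] /=.
    have cz : (fun z : 'cV[R]_a => z i j) @ f d --> s (d i j).
      have E : f d i j = s (d i j) by rewrite /f mxE.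
      rewrite -E; exact: (@coord_continuous R a 1 i j (f d)).
    have l1 : s (d i j - h) < s (d i j) by apply: ms; rewrite ltrBlDr ltrDl.
    have l2 : s (d i j) < s (d i j + h) by apply: ms; rewrite ltrDl.
    have h1 := @cvgr_gt _ _ _ _ _ _ cz _ l1; have h2 := @cvgr_lt _ _ _ _ _ _ cz _ l2.
    near=> z; apply/andP; split; near: z; [exact: h1 | exact: h2].
  apply: filterS => z Hz.
  have : forall ij : 'I_a * 'I_1, exists u, u \in `[d ij.1 ij.2 - h, d ij.1 ij.2 + h]%R /\ s u = z ij.1 ij.2.
    move=> ij; have /andP [z1 z2] := Hz ij.
    have hab : d ij.1 ij.2 - h <= d ij.1 ij.2 + h by rewrite lerD2l -subr_ge0 opprK addr_ge0 // ltW.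
    have cw : {within `[d ij.1 ij.2 - h, d ij.1 ij.2 + h], continuous s}.
      by apply: continuous_subspaceT.
    have sab : s (d ij.1 ij.2 - h) <= s (d ij.1 ij.2 + h) by apply/ltW/ms; lra.
    have mm : Num.min (s (d ij.1 ij.2 - h)) (s (d ij.1 ij.2 + h)) <= z ij.1 ij.2 <=
              Num.max (s (d ij.1 ij.2 - h)) (s (d ij.1 ij.2 + h)).
      by rewrite (min_l sab) (max_r sab); apply/andP; split; apply: ltW.
    have [u Hu1 Hu2] := @IVT R s _ _ (z ij.1 ij.2) hab cw mm.
    by exists u; split.
  move=> /choice [u Hu].
  exists (\matrix_(i, j) u (i, j)).
    apply: He; apply/mx_ballE; apply: (@le_lt_trans _ _ h); last by rewrite /h ltr_pdivrMr // ltr_pMr // ltr1n.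
    apply: norm_le_coord; first exact: ltW.
    move=> i j; rewrite !mxE; have [+ _] := Hu (i, j); rewrite in_itv /= => /andP [u1 u2].
    rewrite ler_norml; apply/andP; split; lra.
  by apply/matrixP => i j; rewrite /f !mxE; have [_ ->] := Hu (i, j).
exact: (@layer_gen R a a f V x cf oV Vx bD oI).
Unshelve. all: by end_near.
Qed.

Lemma Hp_ext (R : realType) a b (f g : 'cV[R]_a -> 'cV[R]_b) :
  (forall x, f x = g x) -> Hp f -> Hp g.
Proof. by move=> fg; have -> : f = g by apply: funext. Qed.

Lemma Hp_anti (R : realType) a (s : R -> R) :
  continuous s -> (forall u t, u < t -> s t < s u) ->
  Hp (fun x : 'cV[R]_a => map_mx s x).
Proof.
move=> cs ms.
apply: (@Hp_ext _ _ _ ((fun y => (- 1%:M) *m y + 0) \o (fun x => map_mx (fun t => - s t) x))).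
  by move=> x; apply/matrixP => i j; rewrite /= addr0 mulNmx mul1mx !mxE opprK.
apply: Hp_comp.
- exact: aff_cont.
- apply: Hp_mono.
    by move=> t; apply: continuousN; exact: cs.
  by move=> u t ut; rewrite ltrN2; exact: ms.
- apply: Hp_aff.
  have h : (- 1%:M : 'M[R]_a) *m (- 1%:M) = 1%:M by rewrite mulNmx mulmxN opprK mul1mx.
  by have [] := mulmx1_unit h.
Qed.

Lemma relu_cont (R : realType) : continuous (@relu R).
Proof.
move=> t; apply: (@continuous_max R _ id (fun=> 0)); first exact: cvg_id.
exact: cst_continuous.
Qed.

Lemma Hp_relu (R : realType) a : Hp (fun x : 'cV[R]_a => map_mx (@relu R) x).
Proof.
pose f := fun x : 'cV[R]_a => map_mx (@relu R) x.
have cf : continuous f := @map_cont R a _ (@relu_cont R).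
move=> V x oV Vx bD.
have ofV : open (f @^-1` V) by apply: open_comp => // y _; exact: cf.
set D := connected_component (f @^-1` V) x.
have pos : forall d, D d -> forall i j, 0 < d i j.
  move=> d Dd i j; rewrite ltNge; apply/negP => dij.
  apply: (@line_unbounded R a d (- delta_mx i j) (fun t => t ^+ 2)).
  - by rewrite oppr_eq0; apply/negP => /eqP/matrixP/(_ i j); rewrite !mxE !eqxx /= => /eqP; rewrite oner_eq0.
  - move=> M; exists (`|M| + 1).
    have h1 := ler_norm M; have h2 := normr_ge0 M.
    rewrite expr2; nra.
  - apply: bnd_sub bD; rewrite /D (same_connected_component Dd).
    apply: connected_component_max.
      + by exists 0 => //=; rewrite expr2 mulr0 scale0r addr0.
      + move=> _ [t _ <-]; rewrite /preimage /=.
      have -> : f (d + t ^+ 2 *: - delta_mx i j) = f d.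
        apply/matrixP => k l; rewrite /f !mxE.
        case: (eqVneq k i) => [->|ki] /=; last by rewrite oppr0 mulr0 addr0.
        rewrite (ord1 l); move: dij; rewrite (ord1 j) eqxx /= mulrN1 /relu => dij.
        rewrite (max_r dij) max_r //.
        by rewrite subr_le0 (le_trans dij) // sqr_ge0.
      exact: connected_component_sub Dd.
      + apply: range_connected; apply: line_cont.
      by move=> t; apply: continuousM; exact: cvg_id.
have fD : f @` D = D.
  apply/seteqP; split => [_ [d Dd <-]|d Dd].
    have -> : f d = d by apply/matrixP => i j; rewrite /f mxE /relu max_l //; exact/ltW/pos.
    exact: Dd.
  exists d => //; apply/matrixP => i j; rewrite /f mxE /relu max_l //; exact/ltW/pos.
have oI : open (f @` D) by rewrite fD; exact: (@cc_open R _ _ x ofV).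
exact: (@layer_gen R a a f V x cf oV Vx bD oI).
Qed.


Lemma mul_coord_cont (R : realType) a b (W : 'M[R]_(b,a)) i :
  continuous (fun z : 'cV[R]_a => (W *m z) i 0).
Proof.
under eq_fun do rewrite !mxE.
apply: sum_cont => k y; apply: continuousM; first exact: cst_continuous.
exact: coord_continuous.
Qed.

Lemma out_case (R : realType) n m dout (W : 'M[R]_(dout, m))
  (Psi : 'cV[R]_n -> 'cV[R]_m) (j : 'I_dout) x :
  continuous Psi -> Qp Psi \/ (Hp Psi /\ (0 < m)%N) ->
  decision_region (fun y => W *m Psi y) j x ->
  ~ bounded_set (connected_component (decision_region (fun y => W *m Psi y) j) x).
Proof.
move=> cP hP Dx.
pose K := [set y : 'cV[R]_m | forall k, k != j -> (W *m y) k 0 < (W *m y) j 0].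
have -> : decision_region (fun y => W *m Psi y) j = Psi @^-1` K by [].
have Kx : K (Psi x) := Dx.
have oK : open K.
  rewrite openE => y Ky.
  have : \forall z \near y, forall k, k != j -> (W *m z) k 0 < (W *m z) j 0.
    apply: (@filter_forall _ _ _ (nbhs y) _) => k.
    case: (eqVneq k j) => [->|kj].
      by apply: nearW => z /eqP.
    pose g := fun z : 'cV[R]_m => (W *m z) j 0 - (W *m z) k 0.
    have cg : continuous g.
      move=> z; exact: (@continuousB R R^o _ (fun z : 'cV[R]_m => (W *m z) j 0) (fun z => (W *m z) k 0) z (@mul_coord_cont R m dout W j z) (@mul_coord_cont R m dout W k z)).
    have g0 : 0 < g y by rewrite subr_gt0; exact: Ky.
    have := @cvgr_gt _ _ _ _ _ _ (cg y) _ g0.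
    move=> H; near=> z => _; rewrite -subr_gt0; near: z; exact: H.
  by [].

move=> bD.
case: hP => [hQ|[hH m0]]; first exact: (hQ K x oK Kx bD).
have bK := hH K x oK Kx bD.
set y0 := Psi x in Kx bK.
have sq : forall M : R, exists t, M <= t ^+ 2.
  move=> M; exists (`|M| + 1).
  have h1 := ler_norm M; have h2 := normr_ge0 M.
  rewrite expr2; nra.
have sqc : continuous (fun t : R => t ^+ 2).
  by move=> t; apply: continuousM; exact: cvg_id.
case: (eqVneq y0 0) => [y00|y0n0].
  pose v : 'cV[R]_m := const_mx 1.
  have v0 : v != 0.
    apply/negP => /eqP/matrixP/(_ (Ordinal m0) 0); rewrite !mxE => /eqP.
    by rewrite oner_eq0.
  apply: (@line_unbounded R m y0 v (fun t => t ^+ 2) v0 sq).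
  apply: bnd_sub bK; apply: connected_component_max.
  - by exists 0 => //=; rewrite expr2 mulr0 scale0r addr0.
  - move=> _ [t _ <-] k kj; exfalso; move: (Kx k kj).
    by rewrite y00 mulmx0 !mxE ltxx.
  - by apply: range_connected; apply: line_cont.
apply: (@line_unbounded R m y0 y0 (fun t => t ^+ 2) y0n0 sq).
apply: bnd_sub bK; apply: connected_component_max.
- by exists 0 => //=; rewrite expr2 mulr0 scale0r addr0.
- move=> _ [t _ <-] k kj.
  rewrite -{1 3}(scale1r y0) -scalerDl -!scalemxAr !mxE.
  rewrite ltr_pM2l; first by have := Kx k kj; rewrite !mxE.
  by have := sqr_ge0 t; lra.
- by apply: range_connected; apply: line_cont.
Unshelve. all: by end_near.
Qed.


Lemma main_ind (R : realType) (s : R -> R) (cs : continuous s)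
  (hs : forall a, Hp (fun x : 'cV[R]_a => map_mx s x)) n :
  forall m dout (N : net R m dout) (Psi : 'cV[R]_n -> 'cV[R]_m),
  continuous Psi -> (net_width N <= n)%N -> (Qp Psi \/ (Hp Psi /\ (n <= m)%N)) ->
  forall j x, decision_region (fun y => net_eval s N (Psi y)) j x ->
  ~ bounded_set (connected_component (decision_region (fun y => net_eval s N (Psi y)) j) x).
Proof.
move=> m dout N; elim: N => {m dout} [m dout W | m k dout W b N IH] Psi cP hw hP j x Dx.
  rewrite /= in Dx *; refine (@out_case R n m dout W Psi j x cP _ Dx).
  case: hP => [hQ|[hH nm]]; [by left | right; split => //].
  exact: (leq_trans (leq_trans (leq_ltn_trans (leq0n j) (ltn_ord j)) hw) nm).
have hw1 : (k <= n)%N by apply: leq_trans hw; exact: leq_maxl.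
have hw2 : (net_width N <= n)%N by apply: leq_trans hw; exact: leq_maxr.
pose A := fun y : 'cV[R]_m => map_mx s (W *m y + b).
have cA : continuous A.
  by move=> y; apply: continuous_comp; [exact: aff_cont | exact: map_cont].
have cAP : continuous (A \o Psi).
  by move=> y; apply: continuous_comp; [exact: cP | exact: cA].
apply: (IH (A \o Psi) cAP hw2) => //.
case: hP => [hQ|[hH nm]]; first by left; exact: Qp_comp.
case: (ltnP (\rank W) m) => [rl|rg].
  left; apply: HQp_comp => //.
  set C := cokermx W.
  have C0 : C != 0.
    rewrite -mxrank_eq0 mxrank_coker subn_eq0 -ltnNge; exact: rl.
  have [i ci] : exists i, col i C != 0.
    case: (pselect (exists i, col i C != 0)) => // H; exfalso.
    move/negP: C0; apply; apply/eqP/matrixP => a c.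
    have : ~ (col c C != 0) by move=> h; apply: H; exists c.
    move/negP; rewrite negbK => /eqP/matrixP/(_ a 0).
    by rewrite !mxE.
  apply: (@Qp_kernel R m k A (col i C) ci) => y t.
  have Wv : W *m col i C = 0 by rewrite colE mulmxA mulmx_coker mul0mx.
  by rewrite /A mulmxDr -scalemxAr Wv scaler0 addr0.
have ekm : k = m.
  apply/eqP; rewrite eqn_leq (leq_trans hw1 nm) /=.
  by apply: leq_trans rg (rank_leq_row W).
subst k.
right; split => //.
apply: Hp_comp => //.
have Wu : W \in unitmx by rewrite -row_free_unit /row_free eqn_leq rank_leq_row rg.
have -> : A = (fun y => map_mx s y) \o (fun y => W *m y + b) by [].
apply: Hp_comp; [exact: map_cont | exact: Hp_aff | exact: hs].
Qed.


Theorem theorem10 (R : realType) (sigma : R -> R)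
  (hsigma : (continuous sigma /\
              ((forall s t : R, s < t -> sigma s < sigma t) \/
               (forall s t : R, s < t -> sigma t < sigma s)))
            \/ sigma = @relu R)
  (din dout : nat) (N : net R din dout)
  (hwidth : (net_width N <= din)%N)
  (j : 'I_dout) (x : 'cV[R]_din) :
  decision_region (net_eval sigma N) j x ->
  ~ bounded_set (connected_component (decision_region (net_eval sigma N) j) x).
Proof.
have [cs hs] : continuous sigma /\ forall a, Hp (fun x : 'cV[R]_a => map_mx sigma x).
  case: hsigma => [[cs [inc|dec]]|->].
  - by split => // a; exact: Hp_mono.
  - by split => // a; exact: Hp_anti.
  - by split; [exact: relu_cont | move=> a; exact: Hp_relu].
have hid : Hp (fun y : 'cV[R]_din => y) by move=> V y _ _.
exact: (@main_ind R sigma cs hs din din dout N (fun y => y) (fun y => cvg_id) hwidth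
  (or_intror (conj hid (leqnn din))) j x).
Qed.
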